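(* Let $H$ be a complex Hilbert space and $d$ a positive integer. Suppose that $A=(A_1,\ldots,A_d)$ is a $d$-tuple of commuting contractions on $H$ and $T=(T_1,\ldots,T_d)$ is the commuting operator-valued multishift on $\ell^2_H(\mathbb N^d)$ with operator weights $A^{(j)}_\alpha=A_j$ for all $\alpha\in\mathbb N^d$ and $j=1,\ldots,d$. Then $T$ satisfies the von Neumann's inequality if and only if $A$ satisfies the von Neumann's inequality.
   Context: $\mathbb N$ denotes the nonnegative integers; $\varepsilon_j\in\mathbb N^d$ has $1$ in the $j$-th place and $0$ elsewhere; $\mathbb D^d$ is the open unit polydisc. $\ell^2_H(\mathbb N^d)=\bigoplus_{\alpha\in\mathbb N^d}H$. Given bounded operators $A^{(j)}_\alpha:H\to H$, the operator-valued multishift with these operator weights is the $d$-tuple defined by $T_j(\oplus_\alpha x_\alpha)=\oplus_\alpha A^{(j)}_{\alpha-\varepsilon_j}x_{\alpha-\varepsilon_j}$ (the term being $0$ when $\alpha_j=0$). A commuting $d$-tuple $S$ of contractions satisfies the von Neumann's inequality if $\|p(S)\|\le\sup_{z\in\mathbb D^d}|p(z)|$ for every $p\in\mathbb C[z_1,\ldots,z_d]$, where $p(S)=\sum a_\alpha S_1^{\alpha_1}\cdots S_d^{\alpha_d}$ for $p=\sum a_\alpha z^\alpha$. *)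

(* Defs.v *)
From HB Require Import structures.
From mathcomp Require Import all_boot all_order all_algebra.
From mathcomp Require Import boolp classical_sets functions reals.
From mathcomp Require Import complex.
From mathcomp Require Import mpoly.
Set Implicit Arguments. Unset Strict Implicit. Unset Printing Implicit Defensive.
Import Order.TTheory GRing.Theory Num.Theory.
Local Open Scope ring_scope.

Section Defs.
Variable R : realType.
Local Notation C := (R[i]).

Definition is_inner_product (V : lmodType C) (ip : V -> V -> C) : Prop :=
  [/\ forall (a : C) (x y z : V), ip (a *: x + y) z = a * ip x z + ip y z,
      forall x y : V, ip y x = conjc (ip x y),
      forall x : V, 0 <= ip x x &
      forall x : V, ip x x = 0 -> x = 0].

Definition ipnorm (V : lmodType C) (ip : V -> V -> C) (x : V) : R :=
  Num.sqrt (complex.Re (ip x x)).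

Definition ip_complete (V : lmodType C) (ip : V -> V -> C) : Prop :=
  forall u : nat -> V,
    (forall e : R, 0 < e -> exists N : nat, forall m n : nat,
        (N <= m)%N -> (N <= n)%N -> ipnorm ip (u m - u n) < e) ->
    exists l : V, forall e : R, 0 < e -> exists N : nat, forall n : nat,
        (N <= n)%N -> ipnorm ip (u n - l) < e.

Definition is_hilbert (V : lmodType C) (ip : V -> V -> C) : Prop :=
  is_inner_product ip /\ ip_complete ip.

Definition is_linear_op (V : lmodType C) (S : V -> V) : Prop :=
  forall (a : C) (x y : V), S (a *: x + y) = a *: S x + S y.

Definition is_contraction (V : lmodType C) (ip : V -> V -> C) (S : V -> V) : Prop :=
  is_linear_op S /\ forall x : V, ipnorm ip (S x) <= ipnorm ip x.

Definition commuting_tuple (X : Type) (d : nat) (S : 'I_d -> X -> X) : Prop :=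
  forall i j : 'I_d, S i \o S j = S j \o S i.

Definition op_monomial (X : Type) (d : nat) (S : 'I_d -> X -> X)
    (m : 'X_{1..d}) : X -> X :=
  \big[(@comp X X X)/id]_(j < d) iter (m j) (S j).

Definition op_poly (X : lmodType C) (d : nat) (S : 'I_d -> X -> X)
    (p : {mpoly C[d]}) (x : X) : X :=
  \sum_(m <- msupp p) p@_m *: op_monomial S m x.

Definition op_norm (X : Type) (D : set X) (nrm : X -> R) (S : X -> X) : R :=
  sup [set nrm (S x) | x in [set x | D x /\ nrm x <= 1]].

Definition polydisc (d : nat) : set ('I_d -> C) :=
  [set z | forall j : 'I_d, Normc.normc (z j) < 1].

Definition poly_sup_norm (d : nat) (p : {mpoly C[d]}) : R :=
  sup [set Normc.normc (p.@[z]) | z in @polydisc d].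

Definition von_neumann (X : lmodType C) (D : set X) (nrm : X -> R) (d : nat)
    (S : 'I_d -> X -> X) : Prop :=
  forall p : {mpoly C[d]}, op_norm D nrm (op_poly S p) <= poly_sup_norm p.

(** The Hilbert space l^2_H(N^d): H-valued families on N^d = 'X_{1..d}
    that are square summable; the squared norm is the sup of finite
    partial sums. *)
Definition l2_partial_sums (V : lmodType C) (ip : V -> V -> C) (d : nat)
    (x : 'X_{1..d} -> V) : set R :=
  [set \sum_(a <- s) ipnorm ip (x a) ^+ 2 | s in [set s : seq 'X_{1..d} | uniq s]].

Definition in_l2 (V : lmodType C) (ip : V -> V -> C) (d : nat) : set ('X_{1..d} -> V) :=
  [set x | has_ubound (l2_partial_sums ip x)].

Definition l2norm (V : lmodType C) (ip : V -> V -> C) (d : nat)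
    (x : 'X_{1..d} -> V) : R :=
  Num.sqrt (sup (l2_partial_sums ip x)).

Definition multishift (V : lmodType C) (d : nat)
    (W : 'I_d -> 'X_{1..d} -> V -> V) (j : 'I_d) (x : 'X_{1..d} -> V) :
    'X_{1..d} -> V :=
  fun alpha => if alpha j == 0%N then 0
               else W j (alpha - U_(j))%MM (x (alpha - U_(j))%MM).

End Defs.

(* Main.v *)
Require Import Defs.
From HB Require Import structures.
From mathcomp Require Import all_boot all_order all_algebra.
From mathcomp Require Import boolp classical_sets functions reals.
From mathcomp Require Import complex.
From mathcomp Require Import mpoly.
Import Order.TTheory GRing.Theory Num.Theory.
Local Open Scope ring_scope.
Set Implicit Arguments. Unset Strict Implicit. Unset Printing Implicit Defensive.

From mathcomp Require Import ring lra.
From mathcomp Require cyclic separable cyclotomic.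

Section IP.
Variable R : realType.
Local Notation C := (R[i]).
Variable V : lmodType C.
Variable ip : V -> V -> C.
Hypothesis hip : is_inner_product ip.

Lemma cjD (a b : C) : conjc (a + b) = conjc a + conjc b.
Proof. by case: a => a1 a2; case: b => b1 b2 /=; rewrite opprD. Qed.
Lemma cjM (a b : C) : conjc (a * b) = conjc a * conjc b.
Proof.
case: a => a1 a2; case: b => b1 b2 /=; congr (_ +i* _)%C; ring.
Qed.
Lemma cjN (a : C) : conjc (- a) = - conjc a.
Proof. by case: a. Qed.
Lemma cj0 : conjc (0 : C) = 0.
Proof. by rewrite /= oppr0. Qed.
Lemma cj1 : conjc (1 : C) = 1.
Proof. by rewrite /= oppr0. Qed.

Lemma ipDZl a x y z : ip (a *: x + y) z = a * ip x z + ip y z.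
Proof. by case: hip. Qed.
Lemma ipC x y : ip y x = conjc (ip x y).
Proof. by case: hip => _ h _ _; apply: h. Qed.
Lemma ip0l z : ip 0 z = 0.
Proof.
have := ipDZl 1 0 0 z; rewrite scaler0 addr0 mul1r => h.
by apply: (@addrI _ (ip 0 z)); rewrite addr0 -h.
Qed.
Lemma ipDl x y z : ip (x + y) z = ip x z + ip y z.
Proof. by have := ipDZl 1 x y z; rewrite scale1r mul1r. Qed.
Lemma ipZl a x z : ip (a *: x) z = a * ip x z.
Proof. by rewrite -[a *: x]addr0 ipDZl ip0l addr0. Qed.
Lemma ipNl x z : ip (- x) z = - ip x z.
Proof. by rewrite -scaleN1r ipZl mulN1r. Qed.
Lemma ipDr x y z : ip z (x + y) = ip z x + ip z y.
Proof. by rewrite ipC ipDl cjD -!ipC. Qed.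
Lemma ipZr a x z : ip z (a *: x) = conjc a * ip z x.
Proof. by rewrite ipC ipZl cjM -ipC. Qed.
Lemma ip0r z : ip z 0 = 0.
Proof. by rewrite ipC ip0l cj0. Qed.
Lemma ipNr x z : ip z (- x) = - ip z x.
Proof. by rewrite -scaleN1r ipZr cjN cj1 mulN1r. Qed.
Lemma ip_suml (I : Type) (r : seq I) (F : I -> V) z :
  ip (\sum_(i <- r) F i) z = \sum_(i <- r) ip (F i) z.
Proof.
elim: r => [|a r IH]; first by rewrite !big_nil ip0l.
by rewrite !big_cons ipDl IH.
Qed.
Lemma ip_sumr (I : Type) (r : seq I) (F : I -> V) z :
  ip z (\sum_(i <- r) F i) = \sum_(i <- r) ip z (F i).
Proof.
elim: r => [|a r IH]; first by rewrite !big_nil ip0r.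
by rewrite !big_cons ipDr IH.
Qed.

Definition nn (x : V) : R := complex.Re (ip x x).

Lemma ip_ge0 x : 0 <= ip x x.
Proof. by case: hip. Qed.
Lemma ipE x : ip x x = (nn x)%:C%C.
Proof.
have := ip_ge0 x; rewrite /nn; case: (ip x x) => a b.
by rewrite lecE /= => /andP[/eqP -> _].
Qed.
Lemma nn_ge0 x : 0 <= nn x.
Proof. by have := ip_ge0 x; rewrite ipE lecR. Qed.
Lemma nn_eq0 x : nn x = 0 -> x = 0.
Proof. by move=> h; case: hip => _ _ _; apply; rewrite ipE h. Qed.

Lemma ipnormE x : ipnorm ip x = Num.sqrt (nn x).
Proof. by []. Qed.
Lemma ipnorm_ge0 x : 0 <= ipnorm ip x.
Proof. exact: sqrtr_ge0. Qed.
Lemma ipnorm_sq x : ipnorm ip x ^+ 2 = nn x.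
Proof. by rewrite ipnormE sqr_sqrtr // nn_ge0. Qed.
Lemma ipnorm_eq0 x : ipnorm ip x = 0 -> x = 0.
Proof. by move=> h; apply: nn_eq0; rewrite -ipnorm_sq h expr0n. Qed.
Lemma ipnorm0 : ipnorm ip 0 = 0.
Proof. by rewrite ipnormE /nn ip0l /= sqrtr0. Qed.

Lemma conjc_mul_normc (a : C) : a * conjc a = ((Normc.normc a) ^+ 2)%:C%C.
Proof. by rewrite -sqr_normc rmorphXn. Qed.

Lemma nnZ a x : nn (a *: x) = Normc.normc a ^+ 2 * nn x.
Proof.
rewrite /nn ipZl ipZr mulrA conjc_mul_normc ipE.
by rewrite /= mul0r subr0.
Qed.

Lemma ipnormZ a x : ipnorm ip (a *: x) = Normc.normc a * ipnorm ip x.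
Proof.
rewrite !ipnormE nnZ sqrtrM ?sqr_ge0 // sqrtr_sqr ger0_norm //.
by case: a => a b; apply: sqrtr_ge0.
Qed.

Lemma ipnormN x : ipnorm ip (- x) = ipnorm ip x.
Proof. by rewrite -scaleN1r ipnormZ normcN Normc.normc1 mul1r. Qed.

Lemma Re_ipC x y : complex.Re (ip y x) = complex.Re (ip x y).
Proof. by rewrite ipC; case: (ip x y). Qed.

Lemma nn_comb (a b : R) x y :
  nn (a%:C%C *: x + b%:C%C *: y) =
  a ^+ 2 * nn x + 2 * a * b * complex.Re (ip x y) + b ^+ 2 * nn y.
Proof.
have ReD (u w : C) : complex.Re (u + w) = complex.Re u + complex.Re w.
  by case: u; case: w.
have ReM (u : R) (w : C) : complex.Re (u%:C%C * w) = u * complex.Re w.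
  by case: w => p q /=; rewrite mul0r subr0.
rewrite /nn ipDl !ipDr !ipZl !ipZr !conjc_real.
rewrite !ReD !ReM Re_ipC.
by rewrite expr2 expr2; ring.
Qed.

Lemma CS_Re x y : complex.Re (ip x y) <= ipnorm ip x * ipnorm ip y.
Proof.
have [hx|hx] := eqVneq (ipnorm ip x) 0.
  by rewrite hx mul0r (ipnorm_eq0 hx) ip0l.
have [hy|hy] := eqVneq (ipnorm ip y) 0.
  by rewrite hy mulr0 (ipnorm_eq0 hy) ip0r.
set a := ipnorm ip x; set b := ipnorm ip y.
have ha : 0 < a by rewrite lt0r hx ipnorm_ge0.
have hb : 0 < b by rewrite lt0r hy ipnorm_ge0.
have := nn_ge0 (b%:C%C *: x + (- a)%:C%C *: y).
rewrite nn_comb -!ipnorm_sq -/a -/b.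
set t := complex.Re _ => h.
have h2 : 0 <= 2 * a * b * (a * b - t) by rewrite (_ : 2 * a * b * (a * b - t) = b ^+ 2 * a ^+ 2 + 2 * b * - a * t + (- a) ^+ 2 * b ^+ 2); [|ring].
have hab : 0 < 2 * a * b by rewrite !mulr_gt0.
by rewrite -subr_ge0 -(pmulr_rge0 _ hab).
Qed.

Lemma ipnormD x y : ipnorm ip (x + y) <= ipnorm ip x + ipnorm ip y.
Proof.
have h := nn_comb 1 1 x y; rewrite !scale1r in h.
rewrite ipnormE -(ger0_norm (addr_ge0 (ipnorm_ge0 x) (ipnorm_ge0 y))).
rewrite -sqrtr_sqr ler_sqrt ?sqr_ge0 // h -!ipnorm_sq.
have := CS_Re x y; set t := complex.Re _ => ht.
rewrite sqrrD; nra.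
Qed.

Lemma ipnorm_sum (I : Type) (r : seq I) (F : I -> V) :
  ipnorm ip (\sum_(i <- r) F i) <= \sum_(i <- r) ipnorm ip (F i).
Proof.
elim: r => [|a r IH]; first by rewrite !big_nil ipnorm0.
rewrite !big_cons; apply: le_trans (ipnormD _ _) _.
by rewrite lerD2l.
Qed.

End IP.

Section Sums.
Variable (T : eqType) (M : nmodType).

Lemma big_common (r s : seq T) (F : T -> M) :
  uniq r -> uniq s ->
  (forall m, m \in r -> m \notin s -> F m = 0) ->
  (forall m, m \in s -> m \notin r -> F m = 0) ->
  \sum_(m <- r) F m = \sum_(m <- s) F m.
Proof.
move=> ur us h1 h2.
rewrite -(big_rmcond_in (fun m => m \in s)); last by move=> i ir /h1; apply.
rewrite -[RHS](big_rmcond_in (fun m => m \in r)); last by move=> i ir /h2; apply.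
rewrite -[LHS]big_filter -[RHS]big_filter; apply: perm_big; apply: uniq_perm; rewrite ?filter_uniq //.
by move=> i; rewrite !mem_filter andbC.
Qed.

Lemma big_sup (r s : seq T) (F : T -> M) :
  uniq r -> uniq s -> {subset s <= r} ->
  (forall m, m \in r -> m \notin s -> F m = 0) ->
  \sum_(m <- r) F m = \sum_(m <- s) F m.
Proof.
move=> ur us sr h; apply: big_common => // m ms /negP []; exact: sr.
Qed.
End Sums.

Lemma sum_le_sub (R : realDomainType) (T : eqType) (s t : seq T) (F : T -> R) :
  uniq s -> uniq t -> {subset s <= t} -> (forall a, 0 <= F a) ->
  \sum_(a <- s) F a <= \sum_(a <- t) F a.
Proof.
move=> us ut st hF.
rewrite [X in _ <= X](bigID (fun a => a \in s)) /=.
have -> : \sum_(i <- t | i \in s) F i = \sum_(i <- s) F i.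
  rewrite -big_filter; apply: perm_big; apply: uniq_perm; rewrite ?filter_uniq //.
  by move=> i; rewrite mem_filter; apply/andP/idP => [[]//|h]; split => //; apply: st.
by rewrite lerDl sumr_ge0.
Qed.

Section Ops.
Variable R : realType.
Local Notation C := (R[i]).
Variable V : lmodType C.

Lemma lin0 (S : V -> V) : is_linear_op S -> S 0 = 0.
Proof.
move=> h; have := h 1 0 0; rewrite scaler0 addr0 scale1r => e.
by apply: (@addrI _ (S 0)); rewrite addr0 -e.
Qed.
Lemma linD (S : V -> V) : is_linear_op S -> forall x y, S (x + y) = S x + S y.
Proof. by move=> h x y; rewrite -[x in S (x + _)]scale1r h scale1r. Qed.
Lemma linZ (S : V -> V) : is_linear_op S -> forall a x, S (a *: x) = a *: S x.
Proof. by move=> h a x; rewrite -[a *: x]addr0 h lin0 // addr0. Qed.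
Lemma lin_sum (S : V -> V) : is_linear_op S ->
  forall (I : Type) (r : seq I) (F : I -> V), S (\sum_(i <- r) F i) = \sum_(i <- r) S (F i).
Proof.
move=> h I r F; elim: r => [|a r IH]; first by rewrite !big_nil lin0.
by rewrite !big_cons linD // IH.
Qed.
Lemma lin_comp (S1 S2 : V -> V) : is_linear_op S1 -> is_linear_op S2 -> is_linear_op (S1 \o S2).
Proof. by move=> h1 h2 a x y /=; rewrite h2 h1. Qed.
Lemma lin_id : is_linear_op (@id V).
Proof. by []. Qed.
Lemma lin_iter (S : V -> V) n : is_linear_op S -> is_linear_op (iter n S).
Proof.
move=> h; elim: n => [|n IH] // a x y /=; by rewrite IH h.
Qed.

Lemma op_monomial_lin d (S : 'I_d -> V -> V) m :
  (forall j, is_linear_op (S j)) -> is_linear_op (op_monomial S m).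
Proof.
move=> h; rewrite /op_monomial; apply: (big_ind (@is_linear_op R V)).
- exact: lin_id.
- by move=> f g; apply: lin_comp.
- by move=> j _; apply: lin_iter.
Qed.

Lemma op_poly_sup d (S : 'I_d -> V -> V) (p : {mpoly C[d]}) (r : seq 'X_{1..d}) x :
  uniq r -> {subset msupp p <= r} ->
  op_poly S p x = \sum_(m <- r) p@_m *: op_monomial S m x.
Proof.
move=> ur sr; rewrite /op_poly; symmetry; apply: big_sup.
- exact: ur.
- exact: msupp_uniq.
- exact: sr.
- by move=> m _ /memN_msupp_eq0 ->; rewrite scale0r.
Qed.

Lemma op_poly_lin d (S : 'I_d -> V -> V) (p : {mpoly C[d]}) :
  (forall j, is_linear_op (S j)) -> is_linear_op (op_poly S p).
Proof.
move=> h a x y; rewrite /op_poly scaler_sumr -big_split /=; apply: eq_bigr => m _.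
by rewrite (op_monomial_lin m h) scalerDr !scalerA mulrC.
Qed.

Variable ip : V -> V -> C.
Hypothesis hip : is_inner_product ip.

Lemma contr_comp (S1 S2 : V -> V) : is_contraction ip S1 -> is_contraction ip S2 ->
  is_contraction ip (S1 \o S2).
Proof.
move=> [l1 c1] [l2 c2]; split; first exact: lin_comp.
by move=> x /=; apply: le_trans (c1 _) (c2 _).
Qed.
Lemma contr_iter (S : V -> V) n : is_contraction ip S -> is_contraction ip (iter n S).
Proof.
move=> h; elim: n => [|n IH] /=; first by split.
exact: (contr_comp h IH).
Qed.
Lemma op_monomial_contr d (S : 'I_d -> V -> V) m :
  (forall j, is_contraction ip (S j)) -> is_contraction ip (op_monomial S m).
Proof.
move=> h; rewrite /op_monomial; apply: (big_ind (is_contraction ip)).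
- by split.
- by move=> f g; apply: contr_comp.
- by move=> j _; apply: contr_iter.
Qed.

Lemma normc_ge0 (a : C) : 0 <= Normc.normc a.
Proof. by case: a => a b; apply: sqrtr_ge0. Qed.

Lemma op_poly_bound d (S : 'I_d -> V -> V) (p : {mpoly C[d]}) x :
  (forall j, is_contraction ip (S j)) ->
  ipnorm ip (op_poly S p x) <= (\sum_(m <- msupp p) Normc.normc p@_m) * ipnorm ip x.
Proof.
move=> h; rewrite /op_poly mulr_suml.
apply: le_trans (ipnorm_sum hip (msupp p) (fun m => p@_m *: op_monomial S m x)) _.
apply: ler_sum => m _; rewrite (ipnormZ hip) ler_wpM2l ?normc_ge0 //.
by case: (op_monomial_contr m h) => _; apply.
Qed.

End Ops.

Section Scale.
Variable R : realType.
Local Notation C := (R[i]).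

Lemma prim_root_C (N : nat) : (0 < N)%N -> exists w : C, N.-primitive_root w.
Proof.
move=> N_gt0.
pose p : {poly C} := 'X^N - 1; have [r Dp] := closed_field_poly_normal p.
rewrite (monicP _) ?monicXnsubC // scale1r in Dp.
have rn1: all N.-unity_root r by apply/allP=> z; rewrite -root_prod_XsubC -Dp.
have sz_r: (N < (size r).+1)%N.
  by rewrite -(size_prod_XsubC r id) -Dp size_XnsubC.
have [|z] := hasP (cyclic.has_prim_root N_gt0 rn1 _ sz_r); last by exists z.
by rewrite -separable.separable_prod_XsubC -Dp cyclotomic.separable_Xn_sub_1 // pnatr_eq0 -lt0n.
Qed.

Lemma normcX (z : C) n : Normc.normc (z ^+ n) = Normc.normc z ^+ n.
Proof.
elim: n => [|n IH]; first by rewrite !expr0 Normc.normc1.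
by rewrite !exprS Normc.normcM IH.
Qed.

Lemma normc_unity (N : nat) (w : C) : (0 < N)%N -> w ^+ N = 1 -> Normc.normc w = 1.
Proof.
move=> hN hw; apply/eqP; rewrite -(pexpr_eq1 hN) ?normc_ge0 //.
by rewrite -normcX hw Normc.normc1.
Qed.

Variable d : nat.

Definition chi (c : 'I_d -> C) (m : 'X_{1..d}) : C := \prod_(j < d) c j ^+ m j.

Lemma chiD c m1 m2 : chi c (m1 + m2)%MM = chi c m1 * chi c m2.
Proof.
by rewrite /chi -big_split /=; apply: eq_bigr => j _; rewrite mnmDE exprD.
Qed.

Lemma normc_chi c m : (forall j, Normc.normc (c j) = 1) -> Normc.normc (chi c m) = 1.
Proof.
move=> hc; rewrite /chi; apply: (big_ind (fun z => Normc.normc z = 1)).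
- exact: Normc.normc1.
- by move=> a b ha hb; rewrite Normc.normcM ha hb mulr1.
- by move=> j _; rewrite normcX hc expr1n.
Qed.

Definition pscale (c : 'I_d -> C) (p : {mpoly C[d]}) : {mpoly C[d]} :=
  \sum_(m <- msupp p) (p@_m * chi c m) *: 'X_[m].

Lemma pscale_coef c p m : (pscale c p)@_m = p@_m * chi c m.
Proof.
rewrite /pscale raddf_sum.
under eq_bigr do rewrite /= mcoeffZ mcoeffX.
have [ms|nms] := boolP (m \in msupp p).
  rewrite (big_rem m ms) /= eqxx mulr1 big_seq_cond big1 ?addr0 // => m' /andP[hm' _].
  have : m' != m.
    apply/negP => /eqP e; move: hm'; rewrite e.
    by move: (msupp_uniq p); rewrite (perm_uniq (perm_to_rem ms)) /= => /andP[/negP].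
  by move=> /negbTE ->; rewrite mulr0.
rewrite (memN_msupp_eq0 nms) mul0r big_seq_cond big1 // => m' /andP[hm' _].
have : m' != m by apply/negP => /eqP e; move: nms; rewrite -e hm'.
by move=> /negbTE ->; rewrite mulr0.
Qed.

Lemma pscale_msupp c p : {subset msupp (pscale c p) <= msupp p}.
Proof.
move=> m; rewrite !mcoeff_msupp pscale_coef; apply: contraNN => /eqP ->.
by rewrite mul0r.
Qed.

Lemma meval_pscale c p z : (pscale c p).@[z] = p.@[fun j => c j * z j].
Proof.
rewrite !mevalE.
transitivity (\sum_(m <- msupp p) (pscale c p)@_m * \prod_i z i ^+ m i).
  symmetry; apply: big_sup.
  - exact: msupp_uniq.
  - exact: msupp_uniq.
  - exact: pscale_msupp.
  - by move=> m _; rewrite mcoeff_msupp negbK => /eqP ->; rewrite mul0r.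
apply: eq_bigr => m _; rewrite pscale_coef /chi -mulrA; congr (_ * _).
by rewrite -big_split /=; apply: eq_bigr => j _; rewrite exprMn.
Qed.

Lemma poly_sup_norm_pscale c p : (forall j, Normc.normc (c j) = 1) ->
  poly_sup_norm (pscale c p) = poly_sup_norm p.
Proof.
move=> hc; rewrite /poly_sup_norm; congr sup; apply/seteqP; split => y [z hz <-].
  exists (fun j => c j * z j); last by rewrite meval_pscale.
  by move=> j; rewrite Normc.normcM hc mul1r; apply: hz.
have cnz j : c j != 0.
  by apply/negP => /eqP e; have := hc j; rewrite e Normc.normc0 => /eqP; rewrite eq_sym oner_eq0.
exists (fun j => (c j)^-1 * z j).
  by move=> j; rewrite Normc.normcM Normc.normcV hc invr1 mul1r; apply: hz.
rewrite meval_pscale; congr (Normc.normc _); apply: meval_eq => j.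
by rewrite mulrA mulfV // mul1r.
Qed.

Lemma op_poly_pscale (V : lmodType C) (S : 'I_d -> V -> V) c p x :
  op_poly S (pscale c p) x = \sum_(m <- msupp p) (p@_m * chi c m) *: op_monomial S m x.
Proof.
rewrite (op_poly_sup _ _ (msupp_uniq p)); last exact: pscale_msupp.
by apply: eq_bigr => m _; rewrite pscale_coef.
Qed.

End Scale.

From mathcomp Require Import zify.
Section Shift.
Variable R : realType.
Local Notation C := (R[i]).
Variable V : lmodType C.
Variable d : nat.
Local Notation X := 'X_{1..d}.

Definition Shift (mu : X) (B : V -> V) (x : X -> V) : X -> V :=
  fun beta => if (mu <= beta)%MM then B (x (beta - mu)%MM) else 0.

Lemma lem_add_split (mu nu beta : X) :
  (mu + nu <= beta)%MM = (mu <= beta)%MM && (nu <= beta - mu)%MM.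
Proof.
apply/mnm_lepP/andP => [h|[/mnm_lepP h1 /mnm_lepP h2] i].
  by split; apply/mnm_lepP => i; have := h i; rewrite ?mnmDE ?mnmBE; lia.
by have := h1 i; have := h2 i; rewrite mnmDE mnmBE; lia.
Qed.

Lemma Shift0 x : Shift 0%MM id x = x.
Proof.
apply/funext => beta; rewrite /Shift subm0.
by have -> : (0 <= beta)%MM by apply/mnm_lepP => i; rewrite mnm0E.
Qed.

Lemma Shift_comp mu nu (B B' : V -> V) x : B 0 = 0 ->
  Shift mu B (Shift nu B' x) = Shift (mu + nu)%MM (B \o B') x.
Proof.
move=> hB; apply/funext => beta; rewrite /Shift lem_add_split submDA.
by case: (mu <= beta)%MM; case: (nu <= beta - mu)%MM.
Qed.

Variable A : 'I_d -> V -> V.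
Hypothesis hA : forall j, is_linear_op (A j).
Local Notation T := (multishift (fun (j : 'I_d) (_ : X) => A j)).

Lemma T_shift j x : T j x = Shift U_(j)%MM (A j) x.
Proof.
apply/funext => beta; rewrite /multishift /Shift lep1mP.
by case: eqP.
Qed.

Lemma iter_T j n x : iter n (T j) x = Shift (U_(j) *+ n)%MM (iter n (A j)) x.
Proof.
elim: n x => [|n IH] x; first by rewrite mulm0n Shift0.
rewrite /= IH T_shift Shift_comp; last exact: lin0.
by rewrite mulmS.
Qed.

Lemma bigcomp_T (m : X) (r : seq 'I_d) x :
  (\big[comp/id]_(j <- r) iter (m j) (T j)) x =
  Shift (\sum_(j <- r) U_(j) *+ m j)%MM (\big[comp/id]_(j <- r) iter (m j) (A j)) x.
Proof.
elim: r x => [|a r IH] x; first by rewrite !big_nil Shift0.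
rewrite !big_cons /= IH iter_T Shift_comp //.
apply: lin0; exact: lin_iter.
Qed.

Lemma op_monomial_T m x : op_monomial T m x = Shift m (op_monomial A m) x.
Proof.
rewrite /op_monomial bigcomp_T; congr Shift.
exact: (esym (multinomUE_id m)).
Qed.

Lemma op_poly_T (p : {mpoly C[d]}) x beta :
  op_poly T p x beta = \sum_(m <- msupp p) p@_m *:
     (if (m <= beta)%MM then op_monomial A m (x (beta - m)%MM) else 0).
Proof.
rewrite /op_poly fct_sumE; apply: eq_bigr => m _.
by rewrite scalrfctE op_monomial_T.
Qed.

End Shift.

Section Box.
Variable d : nat.
Local Notation X := 'X_{1..d}.

Definition mon N (b : {ffun 'I_d -> 'I_N}) : X := [multinom (b i : nat) | i < d].
Definition boxs N : seq X := [seq mon b | b <- enum {ffun 'I_d -> 'I_N}].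
Definition in_box (N : nat) (a : X) := [forall i, (a i < N)%N].

Lemma mon_inj N : injective (@mon N).
Proof.
move=> b1 b2 e; apply/ffunP => i; apply: val_inj.
by have := congr1 (fun m : X => m i) e; rewrite /mon !mnmE.
Qed.

Lemma boxs_uniq N : uniq (boxs N).
Proof. by rewrite map_inj_uniq ?enum_uniq //; apply: mon_inj. Qed.

Lemma mem_boxs N a : (a \in boxs N) = in_box N a.
Proof.
apply/mapP/forallP => [[b _ ->] i|h].
  by rewrite /mon mnmE.
exists [ffun i => Ordinal (h i)]; first by rewrite mem_enum.
by apply/mnmP => i; rewrite /mon mnmE ffunE.
Qed.

Lemma sum_boxs N (M : nmodType) (F : X -> M) :
  \sum_(a <- boxs N) F a = \sum_(b : {ffun 'I_d -> 'I_N}) F (mon b).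
Proof. by rewrite big_map big_enum. Qed.

Lemma size_boxs N : size (boxs N) = (N ^ d)%N.
Proof.
rewrite size_map -cardE.
have := card_ffun 'I_d 'I_N; rewrite !card_ord => <-.
by apply: eq_card.
Qed.

End Box.

Section Parseval.
Variable R : realType.
Local Notation C := (R[i]).
Variable d N : nat.
Hypothesis hN : (0 < N)%N.
Variable w : C.
Hypothesis hw : N.-primitive_root w.
Local Notation X := 'X_{1..d}.

Lemma cj_expr (z : C) n : conjc (z ^+ n) = conjc z ^+ n.
Proof. by elim: n => [|n IH]; [rewrite !expr0 cj1 | rewrite !exprS cjM IH]. Qed.

Lemma cj_prod (I : Type) (r : seq I) (F : I -> C) :
  conjc (\prod_(i <- r) F i) = \prod_(i <- r) conjc (F i).
Proof. by elim: r => [|a r IH]; [rewrite !big_nil cj1 | rewrite !big_cons cjM IH]. Qed.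

Lemma normc_w : Normc.normc w = 1.
Proof. exact: (normc_unity hN (prim_expr_order hw)). Qed.

Lemma normc_wX n : Normc.normc (w ^+ n) = 1.
Proof. by rewrite normcX normc_w expr1n. Qed.

Lemma mul_cj_normc1 (z : C) : Normc.normc z = 1 -> z * conjc z = 1.
Proof. by move=> h; rewrite conjc_mul_normc h expr1n. Qed.

Lemma wX_neq0 n : w ^+ n != 0.
Proof.
apply/negP => /eqP e; have := normc_wX n; rewrite e Normc.normc0 => /eqP.
by rewrite eq_sym oner_eq0.
Qed.

Lemma wX_inj (a b : nat) : (a < N)%N -> (b < N)%N -> w ^+ a = w ^+ b -> a = b.
Proof.
wlog lab : a b / (a <= b)%N.
  move=> H ha hb e; case: (leqP a b) => h; first exact: H.
  by apply/esym/H => //; apply: ltnW.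
move=> ha hb wab; apply/eqP; rewrite eqn_leq lab /=.
have : w ^+ (b - a) == 1.
  have e : w ^+ b = w ^+ (b - a) * w ^+ a by rewrite -exprD subnK.
  move: wab; rewrite e -{1}[w ^+ a]mul1r => /eqP.
  by rewrite (inj_eq (mulIf (wX_neq0 a))) eq_sym.
rewrite -(prim_order_dvd hw) => hdiv.
have [e0|hba] := eqVneq (b - a)%N 0%N; first by move/eqP: e0; rewrite subn_eq0.
move: hdiv => /dvdn_leq; rewrite lt0n hba => /(_ isT).
by rewrite leqNgt (leq_ltn_trans (leq_subr _ _) hb).
Qed.

Lemma geo_sum (a b : nat) : (a < N)%N -> (b < N)%N ->
  \sum_(t < N) (w ^+ t) ^+ a * conjc ((w ^+ t) ^+ b) = if a == b then N%:R else 0.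
Proof.
move=> ha hb; set z := w ^+ a * conjc (w ^+ b).
have -> : \sum_(t < N) (w ^+ t) ^+ a * conjc ((w ^+ t) ^+ b) = \sum_(t < N) z ^+ t.
  by apply: eq_bigr => t _; rewrite /z exprMn !cj_expr -!exprM (mulnC t a) (mulnC t b).
have [eab|nab] := eqVneq a b.
  rewrite /z eab mul_cj_normc1 ?normc_wX //.
  by under eq_bigr do rewrite expr1n; rewrite sumr_const card_ord.
have zN : z ^+ N = 1.
  rewrite /z exprMn -exprM (mulnC a N) exprM (prim_expr_order hw) expr1n mul1r.
  by rewrite cj_expr -exprM mulnC exprM -cj_expr (prim_expr_order hw) cj1 expr1n.
have z1 : z != 1.
  apply/eqP => ez.
  have wab : w ^+ a = w ^+ b.
    have := congr1 (fun y => y * w ^+ b) ez.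
    by rewrite /z -mulrA [conjc _ * _]mulrC mul_cj_normc1 ?normc_wX // mulr1 mul1r.
  by move: nab; rewrite (wX_inj ha hb wab) eqxx.
have := subrX1 z N; rewrite zN subrr => /esym /eqP.
by rewrite mulf_eq0 subr_eq0 (negbTE z1) /= => /eqP ->.
Qed.

End Parseval.

Section Parseval2.
Variable R : realType.
Local Notation C := (R[i]).
Variable V : lmodType C.
Variable ip : V -> V -> C.
Hypothesis hip : is_inner_product ip.
Variable d N : nat.
Hypothesis hN : (0 < N)%N.
Variable w : C.
Hypothesis hw : N.-primitive_root w.
Local Notation X := 'X_{1..d}.

Definition ck (k : {ffun 'I_d -> 'I_N}) : 'I_d -> C := fun j => w ^+ k j.
Definition Fk (k : {ffun 'I_d -> 'I_N}) (u : X -> V) : V :=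
  \sum_(a <- boxs d N) chi (ck k) a *: u a.

Lemma orth (a b : X) : a \in boxs d N -> b \in boxs d N ->
  \sum_(k : {ffun 'I_d -> 'I_N}) chi (ck k) a * conjc (chi (ck k) b)
  = if a == b then (N ^ d)%N%:R else 0.
Proof.
rewrite !mem_boxs => /forallP ha /forallP hb.
have e k : chi (ck k) a * conjc (chi (ck k) b) =
   \prod_(j < d) ((w ^+ k j) ^+ a j * conjc ((w ^+ k j) ^+ b j)).
  by rewrite /chi cj_prod -big_split.
under eq_bigr do rewrite e.
rewrite -(bigA_distr_bigA
   (fun (j : 'I_d) (t : 'I_N) => (w ^+ t) ^+ a j * conjc ((w ^+ t) ^+ b j))) /=.
under eq_bigr do rewrite (geo_sum hN hw (ha _) (hb _)).
have [eab|nab] := eqVneq a b.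
  by rewrite eab; under eq_bigr do rewrite eqxx; rewrite prodr_const card_ord natrX.
have : ~~ [forall i, a i == b i].
  apply: contra nab => /forallP h; apply/eqP/mnmP => i; exact/eqP.
move/forallPn => [i hi]; rewrite (bigD1 i) //= (negbTE hi) mul0r.
by [].
Qed.

Lemma parseval_C (u : X -> V) :
  \sum_(k : {ffun 'I_d -> 'I_N}) ip (Fk k u) (Fk k u) =
  (N ^ d)%N%:R * \sum_(a <- boxs d N) ip (u a) (u a).
Proof.
have e k : ip (Fk k u) (Fk k u) =
   \sum_(a <- boxs d N) \sum_(b <- boxs d N)
      (chi (ck k) a * conjc (chi (ck k) b)) * ip (u a) (u b).
  rewrite /Fk (ip_suml hip); apply: eq_bigr => a _.
  rewrite (ipZl hip) (ip_sumr hip) mulr_sumr; apply: eq_bigr => b _.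
  by rewrite (ipZr hip) mulrA.
under eq_bigr do rewrite e.
rewrite exchange_big /= mulr_sumr; apply: eq_big_seq => a ha.
rewrite exchange_big /=.
under eq_big_seq => b hb do rewrite -mulr_suml (orth ha hb).
rewrite (bigD1_seq a) ?(boxs_uniq d N) //= eqxx big1 ?addr0 // => b nb.
by rewrite eq_sym (negbTE nb) mul0r.
Qed.

Lemma parseval (u : X -> V) :
  \sum_(k : {ffun 'I_d -> 'I_N}) nn ip (Fk k u) =
  (N ^ d)%N%:R * \sum_(a <- boxs d N) nn ip (u a).
Proof.
apply: (@complexI R); rewrite rmorphM rmorph_nat !rmorph_sum /=.
rewrite (eq_bigr (fun k => ip (Fk k u) (Fk k u))); last by move=> k _; rewrite (ipE hip).
rewrite [X in _ = _ * X](eq_bigr (fun a => ip (u a) (u a))); last by move=> a _; rewrite (ipE hip).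
exact: parseval_C.
Qed.

End Parseval2.

Section L2.
Variable R : realType.
Local Notation C := (R[i]).
Variable V : lmodType C.
Variable ip : V -> V -> C.
Hypothesis hip : is_inner_product ip.
Variable d : nat.
Local Notation X := 'X_{1..d}.
Local Notation PS := (@l2_partial_sums R V ip d).

Lemma PS_mem (x : X -> V) s : uniq s -> PS x (\sum_(a <- s) nn ip (x a)).
Proof.
move=> us; exists s => //; apply: eq_bigr => a _; exact: (ipnorm_sq hip).
Qed.

Lemma PS_elem (x : X -> V) y : PS x y -> exists2 s, uniq s & y = \sum_(a <- s) nn ip (x a).
Proof.
move=> [s us <-]; exists s => //; apply: eq_bigr => a _; exact: (ipnorm_sq hip).
Qed.

Lemma PS_n0 (x : X -> V) : (PS x !=set0)%classic.
Proof. by exists 0; have := PS_mem x (s := [::]) isT; rewrite big_nil. Qed.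

Lemma l2_ub (x : X -> V) s : in_l2 ip x -> uniq s ->
  \sum_(a <- s) nn ip (x a) <= sup (PS x).
Proof. by move=> h us; apply: (ub_le_sup h); apply: PS_mem. Qed.

Lemma l2_sup_ge0 (x : X -> V) : in_l2 ip x -> 0 <= sup (PS x).
Proof. by move=> h; have := l2_ub (s := [::]) h isT; rewrite big_nil. Qed.

Lemma sum_supp_le (F : X -> R) (U s : seq X) : uniq U -> uniq s ->
  (forall a, 0 <= F a) -> (forall a, a \notin U -> F a = 0) ->
  \sum_(a <- s) F a <= \sum_(a <- U) F a.
Proof.
move=> uU us F0 FU.
rewrite -(big_rmcond_in (fun a => a \in U)); last by move=> a _ /FU.
rewrite -big_filter; apply: sum_le_sub => //; first by rewrite filter_uniq.
by move=> a; rewrite mem_filter => /andP[].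
Qed.

Lemma l2_box (x : X -> V) N : (forall a, ~~ in_box N a -> x a = 0) ->
  in_l2 ip x /\ sup (PS x) = \sum_(a <- boxs d N) nn ip (x a).
Proof.
move=> hx.
have ub : ubound (PS x) (\sum_(a <- boxs d N) nn ip (x a)).
  move=> y /PS_elem [s us ->]; apply: sum_supp_le => //.
  - exact: boxs_uniq.
  - by move=> a; apply: nn_ge0.
  - by move=> a; rewrite mem_boxs => /hx ->; rewrite /nn ip0l.
have hl2 : in_l2 ip x by exists (\sum_(a <- boxs d N) nn ip (x a)).
split => //; apply/le_anti/andP; split; first exact: ge_sup (PS_n0 x) ub.
by apply: (ub_le_sup hl2); apply: PS_mem; apply: boxs_uniq.
Qed.

End L2.

From mathcomp Require Import ring.
From mathcomp Require Import zify.
Section Key.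
Variable R : realType.
Local Notation C := (R[i]).
Variable V : lmodType C.
Variable d : nat.
Local Notation X := 'X_{1..d}.
Variable A : 'I_d -> V -> V.
Hypothesis hAl : forall j, is_linear_op (A j).
Local Notation T := (multishift (fun (j : 'I_d) (_ : X) => A j)).
Variable p : {mpoly C[d]}.

Lemma msupp_coord m j : m \in msupp p -> (m j < msize p)%N.
Proof.
move=> hm; apply: leq_ltn_trans (msize_mdeg_lt hm).
by rewrite mdegE (bigD1 j) //= leq_addr.
Qed.

Lemma in_boxP N (a : X) : reflect (forall j, (a j < N)%N) (in_box N a).
Proof. exact: forallP. Qed.

Lemma Fk_y (N M : nat) (w : C) (hMN : (M + msize p <= N)%N) (x' : X -> V)
    (hx' : forall a, ~~ in_box M a -> x' a = 0) (k : {ffun 'I_d -> 'I_N}) :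
  Fk w k (op_poly T p x') = op_poly A (pscale (ck w k) p) (Fk w k x').
Proof.
rewrite /Fk op_poly_pscale.
under eq_bigr do rewrite (op_poly_T hAl) scaler_sumr.
rewrite exchange_big /=; apply: eq_big_seq => m hm.
set G := fun b : X => chi (ck w k) b *: (p@_m *:
    (if (m <= b)%MM then op_monomial A m (x' (b - m)%MM) else 0)).
have lm := op_monomial_lin m hAl.
transitivity (\sum_(a <- boxs d N) G (a + m)%MM).
  rewrite -(big_map (fun a => (a + m)%MM) xpredT G).
  apply: big_common.
  - exact: boxs_uniq.
  - by rewrite map_inj_uniq ?boxs_uniq //; apply: addIm.
  - move=> b hb hnb; rewrite /G; case: ifP => hmb; last by rewrite !scaler0.
    have : (b - m)%MM \notin boxs d N.
      apply: (contra _ hnb) => h; apply/mapP; exists (b - m)%MM => //.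
      by rewrite submK.
    rewrite mem_boxs => h; rewrite hx'; first by rewrite (lin0 lm) !scaler0.
    apply: (contra _ h) => /in_boxP h2; apply/in_boxP => j.
    by apply: leq_trans (h2 j) _; apply: leq_trans hMN; apply: leq_addr.
  - move=> b /mapP [a ha ->] hnb; have e : (a + m - m)%MM = a := addmK m a.
    rewrite /G /= (lem_addl a m) e.
    rewrite hx'; first by rewrite (lin0 lm) !scaler0.
    apply: (contra _ hnb) => /in_boxP h.
    rewrite mem_boxs; apply/in_boxP => j; rewrite mnmDE.
    have := msupp_coord j hm; have := h j; lia.
rewrite (lin_sum lm) scaler_sumr; apply: eq_bigr => a _.
have e : (a + m - m)%MM = a := addmK m a.
rewrite /G /= (lem_addl a m) e (linZ lm) chiD !scalerA.
by congr (_ *: _); ring.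
Qed.

End Key.

From mathcomp Require Import lra.
Section Main.
Variable R : realType.
Local Notation C := (R[i]).
Variable V : lmodType C.
Variable ip : V -> V -> C.
Hypothesis hip : is_inner_product ip.
Variable d : nat.
Local Notation X := 'X_{1..d}.
Local Notation PS := (@l2_partial_sums R V ip d).
Variable A : 'I_d -> V -> V.
Hypothesis hA : forall j, is_contraction ip (A j).
Let hAl j : is_linear_op (A j) := (hA j).1.
Local Notation T := (multishift (fun (j : 'I_d) (_ : X) => A j)).
Variable p : {mpoly C[d]}.
Variable K : R.
Hypothesis hK0 : 0 <= K.
Hypothesis hK : forall c : 'I_d -> C, (forall j, Normc.normc (c j) = 1) ->
  forall Y, ipnorm ip (op_poly A (pscale c p) Y) <= K * ipnorm ip Y.

Lemma nn_bound c Y : (forall j, Normc.normc (c j) = 1) ->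
  nn ip (op_poly A (pscale c p) Y) <= K ^+ 2 * nn ip Y.
Proof.
move=> hc; have h := hK hc Y.
rewrite -!(ipnorm_sq hip).
have h1 := ipnorm_ge0 ip (op_poly A (pscale c p) Y).
have h2 := ipnorm_ge0 ip Y.
nra.
Qed.

Lemma key_bound x : in_l2 ip x -> forall s, uniq s ->
  \sum_(b <- s) nn ip (op_poly T p x b) <= K ^+ 2 * sup (PS x).
Proof.
move=> hx s us.
set M := (\sum_(b <- s) mdeg b).+1.
set N := (M + msize p)%N.
have hMN : (M <= N)%N by apply: leq_addr.
have hN : (0 < N)%N by apply: leq_trans hMN.
have [w hw] := prim_root_C R hN.
pose x' := fun a : X => if in_box M a then x a else 0.
have hx' a : ~~ in_box M a -> x' a = 0 by rewrite /x' => /negbTE ->.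
have hs b : b \in s -> in_box M b.
  move=> hb; apply/in_boxP => j; rewrite ltnS.
  apply: (@leq_trans (mdeg b)); first by rewrite mdegE (bigD1 j) //= leq_addr.
  by rewrite (bigD1_seq b) //= leq_addr.
have hyy b : in_box M b -> op_poly T p x b = op_poly T p x' b.
  move=> hb; rewrite !(op_poly_T hAl); apply: eq_bigr => m _.
  case: ifP => // hmb; rewrite /x'.
  have -> : in_box M (b - m)%MM.
    apply/in_boxP => j; rewrite mnmBE; apply: leq_ltn_trans (leq_subr _ _) _.
    by move/in_boxP: hb; apply.
  by [].
have boxMN a : in_box M a -> in_box N a.
  by move/in_boxP => h; apply/in_boxP => j; apply: leq_trans (h j) hMN.
apply: (@le_trans _ _ (\sum_(b <- boxs d N) nn ip (op_poly T p x' b))).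
  rewrite (eq_big_seq (fun b => nn ip (op_poly T p x' b))); last first.
    by move=> b hb; rewrite hyy // hs.
  apply: sum_le_sub => //; first exact: boxs_uniq.
    by move=> b hb; rewrite mem_boxs; apply: boxMN; apply: hs.
  by move=> a; apply: nn_ge0.
have hNd : (0 : R) < (N ^ d)%N%:R by rewrite ltr0n expn_gt0 hN.
rewrite -(ler_pM2l hNd) -(parseval hip hN hw).
apply: (@le_trans _ _ (K ^+ 2 * \sum_k nn ip (Fk w k x'))).
  rewrite mulr_sumr; apply: ler_sum => k _.
  rewrite (Fk_y hAl _ _ hx') ?leqnn //; apply: nn_bound => j.
  exact: (normc_wX hN hw).
rewrite (parseval hip hN hw) mulrCA ler_pM2l //.
apply: ler_wpM2l; first exact: exprn_ge0.
apply: (@le_trans _ _ (\sum_(a <- boxs d N) nn ip (x a))).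
  apply: ler_sum => a _; rewrite /x'; case: ifP => _ //.
  by rewrite /nn ip0l //= nn_ge0.
by apply: l2_ub => //; apply: boxs_uniq.
Qed.

Lemma main_bound x : in_l2 ip x ->
  in_l2 ip (op_poly T p x) /\ l2norm ip (op_poly T p x) <= K * l2norm ip x.
Proof.
move=> hx.
have ub : ubound (PS (op_poly T p x)) (K ^+ 2 * sup (PS x)).
  by move=> y /(PS_elem hip) [s us ->]; apply: key_bound.
have hl2 : in_l2 ip (op_poly T p x) by exists (K ^+ 2 * sup (PS x)).
split => //; rewrite /l2norm.
rewrite -(ger0_norm hK0) -sqrtr_sqr -sqrtrM ?sqr_ge0 // ler_sqrt.
  exact: ge_sup (PS_n0 _ _) ub.
by rewrite mulr_ge0 ?sqr_ge0 // l2_sup_ge0.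
Qed.

End Main.

From mathcomp Require Import lra.
Section Real.
Variable R : realType.

Lemma bernoulli (a : R) n : 0 <= a <= 1 -> 1 - n%:R * a <= (1 - a) ^+ n.
Proof.
move=> /andP[a0 a1]; elim: n => [|n IH]; first by rewrite mul0r subr0 expr0.
have h0 : 0 <= (1 - a) ^+ n by apply: exprn_ge0; lra.
rewrite exprS -natr1.
have hn : (0 : R) <= n%:R by apply: ler0n.
have h1 : 0 <= (1 - a) * ((1 - a) ^+ n - (1 - n%:R * a)) by apply: mulr_ge0; lra.
have h2 : 0 <= n%:R * (a * a) by apply: mulr_ge0 => //; apply: mulr_ge0.
nra.
Qed.

Lemma limit_arg (c s : R) (D d : nat) : 0 <= s ->
  (forall M, (0 < M)%N -> (M ^ d)%N%:R * c <= s * ((M + D) ^ d)%N%:R) -> c <= s.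
Proof.
move=> s0 h; rewrite leNgt; apply/negP => sc.
have e0 : 0 < c - s by rewrite subr_gt0.
have c0 : 0 < c by apply: le_lt_trans sc.
pose B : R := c * d%:R * D%:R / (c - s).
have B0 : 0 <= B by rewrite /B divr_ge0 ?mulr_ge0 ?ler0n ?ltW.
pose M := (Num.Def.archi_bound B).+1.
have hM : B < M%:R by rewrite /M -natr1; have := archi_boundP B0; lra.
have := h M isT.
set L := (M + D)%N.
have L0 : (0 : R) < L%:R by rewrite ltr0n /L addn_gt0.
pose a : R := D%:R / L%:R.
have a0 : 0 <= a <= 1.
  apply/andP; split; first by rewrite /a divr_ge0 ?ler0n ?ltW.
  by rewrite /a ler_pdivrMr // mul1r ler_nat /L leq_addl.
have eM : (M%:R : R) = L%:R * (1 - a).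
  by rewrite /a mulrBr mulr1 mulrCA divff ?mulr1 ?gt_eqF // /L natrD addrK.
rewrite !natrX eM exprMn.
have hb := bernoulli d a0.
have hLd : 0 < L%:R ^+ d :> R by apply: exprn_gt0.
have hBL : B < L%:R by apply: lt_le_trans hM _; rewrite ler_nat /L leq_addr.
have hB' : c * d%:R * D%:R < L%:R * (c - s).
  by move: hBL; rewrite /B ltr_pdivrMr.
have key : c * (d%:R * a) < c - s.
  by rewrite /a !mulrA ltr_pdivrMr // [(c - s) * _]mulrC.
move=> H.
have h3 : 0 <= L%:R ^+ d * c * ((1 - a) ^+ d - (1 - d%:R * a)).
  by apply: mulr_ge0; [apply: mulr_ge0; [apply: ltW | apply: ltW] | rewrite subr_ge0].
have k2 : L%:R ^+ d * (c * (d%:R * a)) < L%:R ^+ d * (c - s) by rewrite ltr_pM2l.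
nra.
Qed.

End Real.

From mathcomp Require Import lra zify.
Section Final.
Variable R : realType.
Local Notation C := (R[i]).

Lemma normc_real (r : R) : Normc.normc (r%:C%C) = `|r|.
Proof. by rewrite /= expr0n addr0 sqrtr_sqr. Qed.

Lemma opnorm_le (X : Type) (D : set X) (nrm : X -> R) (S : X -> X) (B : R) :
  (exists x, D x /\ nrm x <= 1) ->
  (forall x, D x -> nrm x <= 1 -> nrm (S x) <= B) -> op_norm D nrm S <= B.
Proof.
move=> [x0 [h1 h2]] h; apply: ge_sup.
  by exists (nrm (S x0)); exists x0.
by move=> y [x [hx1 hx2] <-]; apply: h.
Qed.

Lemma opnorm_ge (X : Type) (D : set X) (nrm : X -> R) (S : X -> X) (K : R) x :
  (forall x, D x -> nrm x <= 1 -> nrm (S x) <= K) ->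
  D x -> nrm x <= 1 -> nrm (S x) <= op_norm D nrm S.
Proof.
move=> hK hx1 hx2; apply: ub_le_sup; last by exists x.
by exists K => y [z [hz1 hz2] <-]; apply: hK.
Qed.

Variable V : lmodType C.
Variable ip : V -> V -> C.
Hypothesis hip : is_inner_product ip.
Variable d : nat.
Local Notation X := 'X_{1..d}.
Local Notation PS := (@l2_partial_sums R V ip d).
Variable A : 'I_d -> V -> V.
Hypothesis hA : forall j, is_contraction ip (A j).
Let hAl j : is_linear_op (A j) := (hA j).1.
Local Notation T := (multishift (fun (j : 'I_d) (_ : X) => A j)).

Lemma zero_l2 : in_l2 ip (fun _ : X => 0 : V) /\ l2norm ip (fun _ : X => 0 : V) = 0.
Proof.
have [h1 h2] := l2_box hip (x := fun _ : X => 0 : V) (N := 0) (fun _ _ => erefl).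
split => //; rewrite /l2norm h2 big1 ?sqrtr0 // => a _.
by rewrite /nn ip0l.
Qed.

Lemma exists_l2_0 : exists x : X -> V, in_l2 ip x /\ l2norm ip x <= 1.
Proof. by exists (fun _ : X => 0 : V); have [h1 h2] := zero_l2; rewrite h2. Qed.

Lemma scale_bound (P : V -> V) (B : R) : is_linear_op P ->
  (forall Y, ipnorm ip Y <= 1 -> ipnorm ip (P Y) <= B) ->
  forall Y, ipnorm ip (P Y) <= B * ipnorm ip Y.
Proof.
move=> hP h Y.
have [e|ne] := eqVneq (ipnorm ip Y) 0.
  by rewrite e mulr0 (ipnorm_eq0 hip e) (lin0 hP) ipnorm0.
set t := ipnorm ip Y.
have t0 : 0 < t by rewrite lt0r ne ipnorm_ge0.
have := h ((t^-1)%:C%C *: Y).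
have ti : 0 <= t^-1 by rewrite invr_ge0 ltW.
rewrite (linZ hP) !(ipnormZ hip) normc_real (ger0_norm ti).
rewrite mulVf ?gt_eqF // lexx => /(_ isT).
by rewrite ler_pdivrMl // mulrC.
Qed.

Lemma crude_bound (p : {mpoly C[d]}) c : (forall j, Normc.normc (c j) = 1) ->
  forall Y, ipnorm ip (op_poly A (pscale c p) Y) <=
    (\sum_(m <- msupp p) Normc.normc p@_m) * ipnorm ip Y.
Proof.
move=> hc Y; rewrite op_poly_pscale mulr_suml.
apply: le_trans (ipnorm_sum hip (msupp p) _) _.
apply: ler_sum => m _; rewrite (ipnormZ hip) Normc.normcM (normc_chi m hc) mulr1.
rewrite ler_wpM2l ?normc_ge0 //.
by case: (op_monomial_contr m hA) => _; apply.
Qed.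

Lemma crude_ge0 (p : {mpoly C[d]}) : 0 <= \sum_(m <- msupp p) Normc.normc p@_m.
Proof. by apply: sumr_ge0 => m _; apply: normc_ge0. Qed.

Lemma forward : von_neumann [set: V] (ipnorm ip) A ->
  von_neumann (@in_l2 R V ip d) (@l2norm R V ip d) T.
Proof.
move=> hvA p; set S := poly_sup_norm p.
have hK1 c : (forall j, Normc.normc (c j) = 1) ->
    forall Y, ipnorm ip Y <= 1 -> ipnorm ip (op_poly A (pscale c p) Y) <= S.
  move=> hc Y hY; rewrite /S -(poly_sup_norm_pscale p hc).
  apply: le_trans (hvA (pscale c p)).
  apply: (opnorm_ge (K := \sum_(m <- msupp (pscale c p)) Normc.normc (pscale c p)@_m)) => //.
  move=> Z _ hZ; apply: le_trans (op_poly_bound hip _ _ hA) _.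
  by apply: ler_piMr => //; apply: crude_ge0.
have hc1 : forall j : 'I_d, Normc.normc ((fun _ => 1 : C) j) = 1.
  by move=> j; apply: Normc.normc1.
have S0 : 0 <= S.
  apply: le_trans (hK1 _ hc1 0 _); first exact: ipnorm_ge0.
  by rewrite ipnorm0.
have hK c (hc : forall j, Normc.normc (c j) = 1) :=
  scale_bound (op_poly_lin (pscale c p) hAl) (hK1 c hc).
apply: opnorm_le; first exact: exists_l2_0.
move=> x hx hx1; have [_ hb] := main_bound hip hA S0 hK hx.
by apply: le_trans hb _; apply: ler_piMr.
Qed.

End Final.

From mathcomp Require Import lra zify.
Section Conv.
Variable R : realType.
Local Notation C := (R[i]).
Variable V : lmodType C.
Variable ip : V -> V -> C.
Hypothesis hip : is_inner_product ip.
Variable d : nat.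
Local Notation X := 'X_{1..d}.
Local Notation PS := (@l2_partial_sums R V ip d).
Variable A : 'I_d -> V -> V.
Hypothesis hA : forall j, is_contraction ip (A j).
Let hAl j : is_linear_op (A j) := (hA j).1.
Local Notation T := (multishift (fun (j : 'I_d) (_ : X) => A j)).

Lemma converse : von_neumann (@in_l2 R V ip d) (@l2norm R V ip d) T ->
  von_neumann [set: V] (ipnorm ip) A.
Proof.
move=> hvT p; set S := poly_sup_norm p.
set K0 := \sum_(m <- msupp p) Normc.normc p@_m.
have hT x : in_l2 ip x -> l2norm ip x <= 1 -> l2norm ip (op_poly T p x) <= S.
  move=> hx hx1; apply: le_trans (hvT p); apply: (opnorm_ge (K := K0)) => //.
  move=> z hz hz1; have [_ hb] := main_bound hip hA (crude_ge0 p) (crude_bound hip hA p) hz.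
  by apply: le_trans hb _; apply: ler_piMr => //; apply: crude_ge0.
have S0 : 0 <= S.
  have [h1 h2] := @zero_l2 R V ip hip d; have := hT _ h1; rewrite h2 ler01 => /(_ isT).
  by apply: le_trans; apply: sqrtr_ge0.
apply: opnorm_le; first by exists 0; split => //; rewrite ipnorm0.
move=> h _ hh.
suff: nn ip (op_poly A p h) <= S ^+ 2.
  rewrite -(ipnorm_sq hip) => hsq.
  have := ipnorm_ge0 ip (op_poly A p h); nra.
apply: (limit_arg (D := msize p) (d := d)); first exact: sqr_ge0.
move=> M M0; set D := msize p; set N := (M + D)%N.
have N0 : (0 < N)%N by rewrite /N addn_gt0 M0.
have hNd : (0 : R) < (N ^ d)%N%:R by rewrite ltr0n expn_gt0 N0.
pose t : R := (Num.sqrt ((N ^ d)%N%:R))^-1.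
have t0 : 0 <= t by rewrite invr_ge0 sqrtr_ge0.
have tt : t ^+ 2 * (N ^ d)%N%:R = 1.
  by rewrite /t exprVn sqr_sqrtr ?ltW // mulVf ?gt_eqF.
have nnth v : nn ip ((t%:C)%C *: v) = t ^+ 2 * nn ip v.
  by rewrite (nnZ hip) normc_real ger0_norm.
pose x := fun a : X => if in_box N a then (t%:C)%C *: h else 0.
have [hxl2 hxsup] := l2_box hip (x := x) (N := N) (fun a ha => ltac:(by rewrite /x (negbTE ha))).
have hxn : l2norm ip x <= 1.
  rewrite /l2norm hxsup (eq_big_seq (fun _ => t ^+ 2 * nn ip h)); last first.
    by move=> a; rewrite mem_boxs => ha; rewrite /x ha nnth.
  rewrite sum_boxs sumr_const card_ffun !card_ord -mulr_natr -mulrA mulrC -mulrA.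
  rewrite [_ * t ^+ 2]mulrC tt mulr1 -(ipnorm_sq hip) sqrtr_sqr ger0_norm //.
  exact: ipnorm_ge0.
have hy := hT x hxl2 hxn.
have [hyl2 _] := main_bound hip hA (crude_ge0 p) (crude_bound hip hA p) hxl2.
have supy : sup (PS (op_poly T p x)) <= S ^+ 2.
  have g0 := l2_sup_ge0 hip hyl2; move: hy; rewrite /l2norm => hy.
  have := sqr_sqrtr g0; have := sqrtr_ge0 (sup (PS (op_poly T p x))); nra.
pose Dv : X := [multinom D | _ < d].
pose I := [seq (mon b + Dv)%MM | b <- enum {ffun 'I_d -> 'I_M}].
have uI : uniq I.
  rewrite map_inj_uniq ?enum_uniq // => b1 b2 e.
  by apply: mon_inj; apply: (addIm e).
have yI (b : {ffun 'I_d -> 'I_M}) :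
    op_poly T p x (mon b + Dv)%MM = (t%:C)%C *: op_poly A p h.
  rewrite (op_poly_T hAl) /op_poly scaler_sumr; apply: eq_big_seq => m hm.
  have hmb : (m <= mon b + Dv)%MM.
    apply/mnm_lepP => j; rewrite mnmDE /mon /Dv !mnmE.
    have := msupp_coord j hm; rewrite -/D; lia.
  have hin : in_box N (mon b + Dv - m)%MM.
    apply/in_boxP => j; rewrite mnmBE mnmDE /mon /Dv !mnmE.
    have := ltn_ord (b j); rewrite /N; lia.
  rewrite hmb /x hin (linZ (op_monomial_lin m hAl)) !scalerA.
  by rewrite mulrC.
have := l2_ub hip hyl2 uI; rewrite big_map big_enum /=.
under eq_bigr do rewrite yI nnth.
rewrite sumr_const card_ffun !card_ord => hI.
have := le_trans hI supy => hI2.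
have := ler_wpM2r (ltW hNd) hI2.
move=> H; rewrite mulr_natl.
have e : (t ^+ 2 * nn ip (op_poly A p h) *+ (M ^ d)) * (N ^ d)%N%:R =
         nn ip (op_poly A p h) *+ (M ^ d).
  by rewrite mulrnAl mulrAC tt mul1r.
by rewrite -e.
Qed.

End Conv.

Unset Implicit Arguments. Set Strict Implicit. Set Printing Implicit Defensive.

Theorem proposition3p6 (R : realType) (V : lmodType R[i])
    (ip : V -> V -> R[i]) (hH : is_hilbert ip)
    (d : nat) (hd : (0 < d)%N)
    (A : 'I_d -> V -> V)
    (hA : forall j : 'I_d, is_contraction ip (A j))
    (hAc : commuting_tuple A) :
  von_neumann (@in_l2 R V ip d) (@l2norm R V ip d)
      (multishift (fun (j : 'I_d) (_ : 'X_{1..d}) => A j))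
  <-> von_neumann (X := V) [set: V] (ipnorm ip) A.
Proof.
have hip := hH.1; split; [exact: converse | exact: forward].
Qed.
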